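(* Consider a birth-and-death process on $\{0,1,2,\dots\}$ whose birth rates $\lambda_n$ and death rates $\mu_n$ all belong to $(0,\infty)$. The process is transient if there exist $c>1$, an integer $K\ge1$ and a number $n_0$ such that for all $n>n_0$ $$\frac{\lambda_n}{\mu_n}\ge 1+\frac1n+\sum_{k=1}^{K-1}\frac{1}{n\prod_{j=1}^{k}\ln_{(j)}n}+\frac{c}{n\prod_{k=1}^{K}\ln_{(k)}n},$$ and it is recurrent if there exist an integer $K\ge1$ and a number $n_0$ such that for all $n>n_0$ $$\frac{\lambda_n}{\mu_n}\le 1+\frac1n+\sum_{k=1}^{K}\frac{1}{n\prod_{j=1}^{k}\ln_{(j)}n}.$$
   Context: $\ln_{(k)}x$ denotes the $k$-fold iterated natural logarithm: $\ln_{(1)}x=\ln x$ and $\ln_{(k)}x=\ln_{(k-1)}(\ln x)$ for $k\ge2$. An empty sum equals $0$. *)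

(* Defs.v *)
From HB Require Import structures.
From mathcomp Require Import all_boot all_order all_algebra.
From mathcomp Require Import all_classical all_reals all_analysis.
Set Implicit Arguments. Unset Strict Implicit. Unset Printing Implicit Defensive.
Import Order.TTheory GRing.Theory Num.Theory.
Import numFieldNormedType.Exports.
Local Open Scope classical_set_scope.
Local Open Scope ring_scope.

Section BD.
Variable R : realType.

Definition lnk (k : nat) (x : R) : R := iter k (@ln R) x.

Variables lam mu : nat -> R.

(* Transition probabilities of the embedded jump chain of the
   birth-and-death process on {0,1,2,...} (state 0 has no death). *)
Definition jumpP (i j : nat) : R :=
  if i == 0%N then (j == 1%N)%:R
  else if j == i.+1 then lam i / (lam i + mu i)
  else if j == i.-1 then mu i / (lam i + mu i)
  else 0.

(* hit t i = probability, starting from i, that the jump chain hits 0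
   for the first time exactly at step t (jumps are nearest-neighbour,
   so from i only states j < i.+2 are reachable). *)
Fixpoint hit (t i : nat) : R :=
  match t with
  | 0%N => (i == 0%N)%:R
  | t'.+1 => if i == 0%N then 0 else \sum_(j < i.+2) jumpP i j * hit t' j
  end.

(* probability that the chain started at 0 first returns to 0 at step t.+1 *)
Definition first_return (t : nat) : R := \sum_(j < 2) jumpP 0 j * hit t j.

(* Recurrence: return to 0 (almost surely) — the total first-return
   probability equals 1.  (A continuous-time chain is recurrent iff its
   jump chain is; the chain is irreducible so state 0 suffices.) *)
Definition bd_recurrent : Prop :=
  (fun N : nat => \sum_(t < N) first_return t) @ \oo --> (1 : R).

Definition bd_transient : Prop := ~ bd_recurrent.

End BD.

(* Main.v *)
Require Import Defs.
From HB Require Import structures.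
From mathcomp Require Import all_boot all_order all_algebra.
From mathcomp Require Import all_classical all_reals all_analysis.
From mathcomp Require Import ring lra.
Import Order.TTheory GRing.Theory Num.Theory.
Import numFieldNormedType.Exports.
Local Open Scope classical_set_scope.
Local Open Scope ring_scope.

Section Prob.
Variable R : realType.
Variables lam mu : nat -> R.
Hypothesis lam0 : forall n, 0 < lam n.
Hypothesis mu0 : forall n, 0 < mu n.

Definition pp i := lam i / (lam i + mu i).
Definition qq i := mu i / (lam i + mu i).

Lemma pq1 i : pp i + qq i = 1.
Proof.
rewrite /pp /qq -mulrDl divff //; have := lam0 i; have := mu0 i.
by move=> a b; rewrite gt_eqF // addr_gt0.
Qed.

Lemma pp_gt0 i : 0 < pp i.
Proof. by rewrite /pp divr_gt0 // addr_gt0. Qed.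
Lemma qq_gt0 i : 0 < qq i.
Proof. by rewrite /qq divr_gt0 // addr_gt0. Qed.

Lemma sum_jump i (f : nat -> R) : (0 < i)%N ->
  \sum_(j < i.+2) jumpP lam mu i j * f j = pp i * f i.+1 + qq i * f i.-1.
Proof.
move=> i0; rewrite big_ord_recr /=.
rewrite -(big_mkord xpredT (fun j => jumpP lam mu i j * f j)) /jumpP.
have -> : (i == 0%N) = false by case: i i0.
rewrite eqxx /= addrC; congr (_ + _).
case: i i0 => // i _ /=.
rewrite big_nat_recr //= big_nat_recr //= eqxx.
have -> : (i.+1 == i.+2) = false by rewrite eqSS; elim: i.
have -> : (i.+1 == i) = false by elim: i.
have -> : (i == i.+2) = false by elim: i.
rewrite mul0r addr0 big_nat_cond big1 ?add0r //.
move=> j /andP[/andP[_ hj] _].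
have -> : (j == i.+2) = false by apply/negbTE; rewrite neq_ltn (ltn_trans hj) // ltnS.
have -> : (j == i) = false by apply/negbTE; rewrite neq_ltn hj.
by rewrite mul0r.
Qed.

Definition H N i := \sum_(t < N) hit lam mu t i.

Lemma H0 i : H 0 i = 0.
Proof. by rewrite /H big_ord0. Qed.

Lemma H_S N i : H N.+1 i = if i == 0%N then 1 else pp i * H N i.+1 + qq i * H N i.-1.
Proof.
rewrite /H big_ord_recl /=.
case: i => [|i].
  by rewrite big1 ?addr0.
rewrite /= add0r.
under eq_bigr => t _ do rewrite add0n.
rewrite exchange_big /=.
under eq_bigr => j _ do rewrite -mulr_sumr.
by rewrite (@sum_jump _ (fun j => \sum_(t < N) hit lam mu t j)).
Qed.

Definition G N i := 1 - H N i.

Lemma G_S0 N : G N.+1 0 = 0.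
Proof. by rewrite /G H_S eqxx subrr. Qed.

Lemma G_S N i : (0 < i)%N -> G N.+1 i = pp i * G N i.+1 + qq i * G N i.-1.
Proof.
move=> i0; rewrite /G H_S; have -> : (i == 0%N) = false by case: i i0.
have := pq1 i; move=> h; rewrite -{1}h; ring.
Qed.

Lemma G01 N i : 0 <= G N i <= 1.
Proof.
elim: N i => [|N IH] i; first by rewrite /G H0 subr0 ler01 lexx.
case: i => [|i]; first by rewrite G_S0 lexx ler01.
rewrite G_S //=.
have /andP[a1 a2] := IH i.+2; have /andP[b1 b2] := IH i.
have hp := pp_gt0 i.+1; have hq := qq_gt0 i.+1; have h := pq1 i.+1.
apply/andP; split; first by rewrite addr_ge0 // mulr_ge0 // ltW.
rewrite -h lerD // ler_piMr //; exact: ltW.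
Qed.

Lemma G_noninc i : nonincreasing_seq (fun N => G N i).
Proof.
apply/nonincreasing_seqP => N.
elim: N i => [|N IH] i.
  by rewrite /= {2}/G H0 subr0; have /andP[] := G01 1 i.
case: i => [|i]; first by rewrite !G_S0.
rewrite /= [G N.+2 _]G_S // [G N.+1 i.+1]G_S //.
have hp := pp_gt0 i.+1; have hq := qq_gt0 i.+1.
by rewrite lerD // ler_wpM2l // ?IH // ltW.
Qed.

Fixpoint rho n := if n is n'.+1 then rho n' * (mu n / lam n) else 1.
Lemma rhoS n : rho n.+1 = rho n * (mu n.+1 / lam n.+1). Proof. by []. Qed.
Lemma rho0 : rho 0 = 1. Proof. by []. Qed.
Arguments rho : simpl never.

Lemma rho_gt0 n : 0 < rho n.
Proof. elim: n => [|n IH]; first exact: ltr01. by rewrite rhoS mulr_gt0 // divr_gt0. Qed.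

Lemma rho_rec n : pp n.+1 * rho n.+1 = qq n.+1 * rho n.
Proof.
rewrite rhoS /pp /qq; have := lam0 n.+1; have := mu0 n.+1 => a b.
field; rewrite ?gt_eqF // addr_gt0 //.
Qed.

Definition S M := \sum_(n < M) rho n.

Lemma S_S M : S M.+1 = S M + rho M.
Proof. by rewrite /S big_ord_recr. Qed.

Lemma transient_crit : (exists B, forall M, S M <= B) -> bd_transient lam mu.
Proof.
move=> [B hB] hrec.
have B0 : 0 < B by apply: lt_le_trans (hB 1%N); rewrite /S big_ord1 rho_gt0.
pose w i := S i / B.
have wG : forall N i, w i <= G N i.
  elim=> [|N IH] i; first by rewrite /G H0 subr0 /w ler_pdivrMr // mul1r.
  case: i => [|i]; first by rewrite G_S0 /w /S big_ord0 mul0r.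
  rewrite G_S //=.
  have e : w i.+1 = pp i.+1 * w i.+2 + qq i.+1 * w i.
    have e' : S i.+1 = pp i.+1 * S i.+2 + qq i.+1 * S i.
      rewrite !S_S; have h := rho_rec i; have h1 := pq1 i.+1.
      have hX : forall X, pp i.+1 * X + qq i.+1 * X = X by move=> X; rewrite -mulrDl h1 mul1r.
      rewrite !mulrDr h -{1}(hX (S i)) -{1}(hX (rho i)); ring.
    by rewrite /w e' mulrDl !mulrA.
  rewrite e lerD // ler_pM2l ?pp_gt0 ?qq_gt0 //.
have hw : forall N, H N 1 <= 1 - rho 0 / B.
  move=> N; have := wG N 1%N; rewrite /G /w /S big_ord1; lra.
move: hrec; rewrite /bd_recurrent => hrec.
have e : (fun N => \sum_(t < N) first_return lam mu t) = (fun N => H N 1).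
  apply: funext => N; apply: eq_bigr => t _.
  by rewrite /first_return big_ord_recr /= big_ord1 /jumpP /= mul0r add0r mul1r.
rewrite e in hrec.
have hpos : 0 < rho 0 / B by rewrite divr_gt0 // rho_gt0.
move/cvgrPdist_lt: hrec => /(_ _ hpos) [N _ hN].
have := hN N (leqnn N); have := hw N.
rewrite ger0_norm; last by have := hw N; lra.
lra.
Qed.

Lemma lim_uniq {u : nat -> R} {a b : R} : u @ \oo --> a -> u @ \oo --> b -> a = b.
Proof. move=> ha hb; have := cvg_lim (@Rhausdorff R) ha; have := cvg_lim (@Rhausdorff R) hb.
by move=> <- <-. Qed.

Lemma recurrent_crit : (forall B, exists M, B < S M) -> bd_recurrent lam mu.
Proof.
move=> hS.
have hc : forall i, cvgn (fun N => G N i).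
  move=> i; apply: nonincreasing_is_cvgn; first exact: G_noninc.
  by exists 0 => _ [N _ <-]; have /andP[] := G01 N i.
pose Gl i := limn (fun N => G N i).
have hG : forall i, (fun N => G N i) @ \oo --> Gl i by move=> i; exact: hc.
have hGS : forall i, (fun N => G N.+1 i) @ \oo --> Gl i.
  by move=> i; have := hG i; rewrite -cvg_shiftS.
have Gl0 : Gl 0%N = 0.
  have := hGS 0%N; have -> : (fun N => G N.+1 0%N) = (fun _ => 0).
    by apply: funext => N; rewrite G_S0.
  by move=> h; apply: (lim_uniq h); exact: cvg_cst.
have GlS : forall i, Gl i.+1 = pp i.+1 * Gl i.+2 + qq i.+1 * Gl i.
  move=> i; have := hGS i.+1.
  have -> : (fun N => G N.+1 i.+1) = (fun N => pp i.+1 * G N i.+2 + qq i.+1 * G N i).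
    by apply: funext => N; rewrite G_S.
  move=> h; apply: (lim_uniq h).
  apply: cvgD; apply: cvgMr; [exact: hG i.+2|exact: hG i].
have Gle1 : forall i, Gl i <= 1.
  move=> i; apply: limr_le; first exact: hc.
  by near=> N; have /andP[] := G01 N i.
have Gge0 : forall i, 0 <= Gl i.
  move=> i; apply: limr_ge; first exact: hc.
  by near=> N; have /andP[] := G01 N i.
have hd : forall i, Gl i.+1 - Gl i = rho i * Gl 1%N.
  elim=> [|i IH]; first by rewrite Gl0 subr0 /= mul1r.
  have e := GlS i; have h1 := pq1 i.+1; have hp := pp_gt0 i.+1.
  have e2 : pp i.+1 * (Gl i.+2 - Gl i.+1) = qq i.+1 * (Gl i.+1 - Gl i).
    have hX : Gl i.+1 = pp i.+1 * Gl i.+1 + qq i.+1 * Gl i.+1.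
      by rewrite -mulrDl h1 mul1r.
    rewrite !mulrBr; move: e hX; set a := Gl i.+1; set b := Gl i.+2; set c := Gl i.
    set p := pp i.+1; set q := qq i.+1; lra.
  rewrite IH in e2.
  apply: (@mulfI _ (pp i.+1)); first by rewrite gt_eqF.
  by rewrite e2 [LHS]mulrA -rho_rec -mulrA.
have hGS1 : forall n, Gl n = Gl 1%N * S n.
  elim=> [|n IH]; first by rewrite Gl0 /S big_ord0 mulr0.
  by rewrite S_S mulrDr -IH -[Gl n.+1](subrK (Gl n)) hd; ring.
have G10 : Gl 1%N = 0.
  apply/eqP; rewrite eq_le Gge0 andbT leNgt; apply/negP => hpos.
  have [M hM] := hS (Gl 1%N)^-1.
  have := Gle1 M; rewrite hGS1 => h.
  have : (Gl 1%N)^-1 * Gl 1%N < S M * Gl 1%N by rewrite ltr_pM2r.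
  rewrite mulVf ?gt_eqF // mulrC; lra.
rewrite /bd_recurrent.
have e : (fun N => \sum_(t < N) first_return lam mu t) = (fun N => 1 - G N 1).
  apply: funext => N; rewrite /G opprB addrC subrK; apply: eq_bigr => t _.
  by rewrite /first_return big_ord_recr /= big_ord1 /jumpP /= mul0r add0r mul1r.
rewrite e -[X in _ --> X]subr0 -G10.
apply: cvgB; [exact: cvg_cst|exact: hG].
Unshelve. all: by end_near.
Qed.
End Prob.

Set Implicit Arguments. Unset Strict Implicit. Unset Printing Implicit Defensive.

Section Anal.
Variable R : realType.

Definition LL (k : nat) (x : R) := \prod_(1 <= j < k.+1) lnk j x.

Lemma lnkS k (x : R) : lnk k.+1 x = ln (lnk k x). Proof. by []. Qed.
Lemma lnkSr k (x : R) : lnk k.+1 x = lnk k (ln x). Proof. by rewrite /lnk iterSr. Qed.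
Lemma lnk0 (x : R) : lnk 0 x = x. Proof. by []. Qed.

Lemma LL0 (x : R) : LL 0 x = 1. Proof. by rewrite /LL big_geq. Qed.
Lemma LLS k (x : R) : LL k.+1 x = LL k x * lnk k.+1 x.
Proof. by rewrite /LL big_nat_recr. Qed.

Definition Pos k (x : R) := forall j, (j <= k)%N -> 1 <= lnk j x.

Lemma PosW k k' (x : R) : (k' <= k)%N -> Pos k x -> Pos k' x.
Proof. by move=> h hp j hj; apply: hp; apply: leq_trans hj h. Qed.

Lemma LL_ge1 k (x : R) : Pos k x -> 1 <= LL k x.
Proof.
elim: k => [|k IH] hp; first by rewrite LL0.
rewrite LLS; have h1 := IH (PosW (leqnSn k) hp); have h2 := hp k.+1 (leqnn _).
by rewrite -[1]mulr1 ler_pM.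
Qed.

Lemma LL_gt0 k (x : R) : Pos k x -> 0 < LL k x.
Proof. by move=> hp; apply: lt_le_trans (LL_ge1 hp). Qed.

Lemma Pos_x k (x : R) : Pos k x -> 1 <= x.
Proof. by move=> hp; apply: (hp 0%N). Qed.

Lemma ln_diff_le (y z : R) : 0 < y -> 0 < z -> ln y - ln z <= (y - z) / z.
Proof.
move=> y0 z0; rewrite -ln_div ?posrE //.
have -> : y / z = 1 + (y - z) / z by rewrite mulrBl divff ?gt_eqF // addrC subrK.
apply: le_ln1Dx; rewrite mulrBl divff ?gt_eqF //.
have : 0 < y / z by rewrite divr_gt0.
lra.
Qed.

Lemma ln_diff_ge (y z : R) : 0 < y -> 0 < z -> (y - z) / y <= ln y - ln z.
Proof.
move=> y0 z0; have := ln_diff_le z0 y0.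
have -> : (y - z) / y = - ((z - y) / y) by rewrite -mulNr opprB.
lra.
Qed.

Lemma DU k (x : R) : Pos k x -> Pos k (x + 1) ->
  lnk k.+1 (x + 1) - lnk k.+1 x <= 1 / (x * LL k x).
Proof.
elim: k => [|k IH] hx hx1.
  have x0 : 0 < x by apply: lt_le_trans (Pos_x hx).
  rewrite LL0 mulr1 /= /lnk /=.
  have x10 : 0 < x + 1 by rewrite addr_gt0.
  by apply: le_trans (ln_diff_le x10 x0) _; rewrite addrAC subrr add0r.
rewrite !(lnkS k.+1).
have z1 := hx k.+1 (leqnn _); have y1 := hx1 k.+1 (leqnn _).
have z0 : 0 < lnk k.+1 x by apply: lt_le_trans z1.
have y0 : 0 < lnk k.+1 (x + 1) by apply: lt_le_trans y1.
apply: le_trans (ln_diff_le y0 z0) _.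
have h := IH (PosW (leqnSn k) hx) (PosW (leqnSn k) hx1).
have L0 := LL_gt0 (PosW (leqnSn k) hx).
have x0 : 0 < x by apply: lt_le_trans (Pos_x hx).
have -> : 1 / (x * LL k.+1 x) = (1 / (x * LL k x)) / lnk k.+1 x.
  by rewrite LLS; field; rewrite !gt_eqF.
by rewrite ler_pM2r ?invr_gt0.
Qed.

Lemma DL k (x : R) : Pos k x -> Pos k (x + 1) ->
  1 / ((x + 1) * LL k (x + 1)) <= lnk k.+1 (x + 1) - lnk k.+1 x.
Proof.
elim: k => [|k IH] hx hx1.
  have x0 : 0 < x by apply: lt_le_trans (Pos_x hx).
  rewrite LL0 mulr1 /= /lnk /=.
  have x10 : 0 < x + 1 by rewrite addr_gt0.
  by apply: le_trans (ln_diff_ge x10 x0); rewrite addrAC subrr add0r.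
rewrite !(lnkS k.+1).
have z1 := hx k.+1 (leqnn _); have y1 := hx1 k.+1 (leqnn _).
have z0 : 0 < lnk k.+1 x by apply: lt_le_trans z1.
have y0 : 0 < lnk k.+1 (x + 1) by apply: lt_le_trans y1.
apply: le_trans (ln_diff_ge y0 z0).
have h := IH (PosW (leqnSn k) hx) (PosW (leqnSn k) hx1).
have L0 := LL_gt0 (PosW (leqnSn k) hx1).
have x0 : 0 < x + 1 by apply: lt_le_trans (Pos_x hx1).
have -> : 1 / ((x + 1) * LL k.+1 (x + 1)) = (1 / ((x + 1) * LL k (x + 1))) / lnk k.+1 (x + 1).
  by rewrite LLS; field; rewrite !gt_eqF.
by rewrite ler_pM2r ?invr_gt0.
Qed.


Lemma lnk_ge m (M x : R) : iter m expR M <= x -> M <= lnk m x.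
Proof.
elim: m x => [|m IH] x h //.
rewrite lnkSr; apply: IH.
have x0 : 0 < x by apply: lt_le_trans (expR_gt0 _) h.
by rewrite -(expRK (iter m expR M)) ler_ln ?posrE ?expR_gt0.
Qed.

Lemma iter_expR_mono j k (M : R) : (j <= k)%N -> iter j expR M <= iter k expR M.
Proof.
elim: k => [|k IH] hj; first by move: hj; rewrite leqn0 => /eqP ->.
rewrite leq_eqVlt in hj; case/orP: hj => [/eqP -> //|hj].
apply: le_trans (IH hj) _; rewrite [X in _ <= X]/=.
have := expR_ge1Dx (iter k expR M); lra.
Qed.

Lemma Pos_of k (x : R) : iter k expR 1 <= x -> Pos k x.
Proof. by move=> h j hj; apply: lnk_ge; apply: le_trans h; exact: iter_expR_mono. Qed.

Definition Psi K (x : R) := \sum_(k < K.+1) lnk k.+1 x.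

Lemma expR_Nln (y : R) : 0 < y -> expR (- ln y) = y^-1.
Proof. by move=> y0; rewrite expRN lnK. Qed.

Lemma expR_Psi K (x : R) : Pos K x -> expR (- Psi K x) = 1 / (x * LL K x).
Proof.
elim: K => [|K IH] hp.
  rewrite /Psi big_ord1 LL0 mulr1 div1r; apply: expR_Nln.
  exact: lt_le_trans (Pos_x hp).
have PsiS : Psi K.+1 x = Psi K x + ln (lnk K.+1 x) by rewrite /Psi big_ord_recr.
rewrite PsiS opprD expRD IH; last exact: PosW (leqnSn K) hp.
have h1 := hp K.+1 (leqnn _).
rewrite expR_Nln; last exact: lt_le_trans h1.
have L0 := LL_gt0 (PosW (leqnSn K) hp).
have x0 : 0 < x by apply: lt_le_trans (Pos_x hp).
rewrite LLS; field; rewrite !gt_eqF //; exact: lt_le_trans h1.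
Qed.

Lemma Psi_diff_le K (x : R) : Pos K x -> Pos K (x + 1) ->
  Psi K (x + 1) - Psi K x <= \sum_(k < K.+1) 1 / (x * LL k x).
Proof.
move=> h h1; rewrite /Psi -sumrB; apply: ler_sum => k _.
have hk : (k <= K)%N by rewrite -ltnS.
by apply: DU; apply: PosW hk _.
Qed.

Lemma Psi_diff_ge K (x : R) : Pos K x -> Pos K (x + 1) ->
  \sum_(k < K.+1) 1 / ((x + 1) * LL k (x + 1)) <= Psi K (x + 1) - Psi K x.
Proof.
move=> h h1; rewrite /Psi -sumrB; apply: ler_sum => k _.
have hk : (k <= K)%N by rewrite -ltnS.
by apply: DL; apply: PosW hk _.
Qed.

Lemma noninc_from (u : nat -> R) N0 : (forall n, (N0 <= n)%N -> u n.+1 <= u n) ->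
  forall n, (N0 <= n)%N -> u n <= u N0.
Proof.
move=> h n /subnK <-; elim: (n - N0)%N => [|d IH]; first by rewrite add0n.
by rewrite addSn; apply: le_trans (h _ _) IH; rewrite leq_addl.
Qed.

Lemma nondec_from (u : nat -> R) N0 : (forall n, (N0 <= n)%N -> u n <= u n.+1) ->
  forall n, (N0 <= n)%N -> u N0 <= u n.
Proof.
move=> h n /subnK <-; elim: (n - N0)%N => [|d IH]; first by rewrite add0n.
by rewrite addSn; apply: le_trans IH (h _ _); rewrite leq_addl.
Qed.

Lemma big_N0 (n0 : R) k : exists N0 : nat, (2 <= N0)%N /\ forall n : nat, (N0 <= n)%N ->
  [/\ n0 < n%:R, Pos k n%:R & 1 < n%:R :> R].
Proof.
pose X := Num.max (Num.max `|n0| (iter k expR 1)) 1.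
have X0 : 0 <= X by rewrite /X le_max ler01 orbT.
have hX := archi_boundP X0.
set N := Num.Def.archi_bound X in hX.
have h1 : `|n0| <= X by rewrite /X !le_max lexx.
have h2 : iter k expR 1 <= X by rewrite /X !le_max lexx orbT.
have h3 : 1 <= X by rewrite /X !le_max lexx orbT.
exists (N.+1); split.
  by rewrite ltnS -(ltr_nat R); apply: le_lt_trans hX.
move=> n hn.
have hn' : N%:R <= n%:R :> R by rewrite ler_nat; apply: leq_trans hn.
have hXn : X < n%:R by apply: lt_le_trans hX hn'.
split.
- by apply: le_lt_trans (ler_norm n0) _; apply: le_lt_trans h1 hXn.
- by apply: Pos_of; apply: ltW; apply: le_lt_trans h2 hXn.
- by apply: le_lt_trans h3 hXn.
Qed.

End Anal.

Section Main.
Variable R : realType.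
Variables lam mu : nat -> R.
Hypothesis lam0 : forall n, 0 < lam n.
Hypothesis mu0 : forall n, 0 < mu n.

Local Notation rh := (rho R lam mu).
Local Notation SS := (S R lam mu).
Let rpos n : 0 < rh n := @rho_gt0 R lam mu lam0 mu0 n.

Lemma SS_S M : SS M.+1 = SS M + rh M.
Proof. by rewrite /S big_ord_recr. Qed.

Lemma SS_mono M N : (M <= N)%N -> SS M <= SS N.
Proof.
move=> /subnK <-; elim: (N - M)%N => [|d IH]; first by rewrite add0n.
rewrite addSn SS_S; apply: le_trans IH _; rewrite lerDl; apply: ltW; exact: rpos.
Qed.

Lemma sum_split0 K (f : nat -> R) : (1 <= K)%N ->
  \sum_(k < K.+1) f k = f 0%N + \sum_(1 <= k < K) f k + f K.
Proof.
move=> hK; rewrite -(big_mkord xpredT) big_ltn // big_nat_recr //= addrA; congr (_ + _ + _); apply: eq_bigr.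
Qed.

Lemma sum_split1 K (f : nat -> R) :
  \sum_(k < K.+1) f k = f 0%N + \sum_(1 <= k < K.+1) f k.
Proof. by rewrite -(big_mkord xpredT) big_ltn. Qed.

Lemma div_le (a n L : R) : 0 <= a -> 0 < n -> 1 <= L -> a / (n * L) <= a / n.
Proof.
move=> a0 n0 L1; rewrite invfM mulrA; apply: ler_piMr; first by apply: divr_ge0 => //; apply: ltW.
by rewrite invf_le1 // (lt_le_trans ltr01).
Qed.

Lemma trans_bound (c : R) K (n0 : R) : 1 < c -> (1 <= K)%N ->
  (forall n : nat, n0 < n%:R ->
        1 + 1 / n%:R
        + \sum_(1 <= k < K) 1 / (n%:R * \prod_(1 <= j < k.+1) lnk j n%:R)
        + c / (n%:R * \prod_(1 <= k < K.+1) lnk k n%:R)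
        <= lam n / mu n) ->
  exists B, forall M, SS M <= B.
Proof.
move=> c1 K1 hyp.
have [N0 [N02 hN]] := big_N0 n0 K.
pose A (n : nat) := \sum_(k < K.+1) 1 / (n%:R * LL k n%:R) + (c - 1) / (n%:R * LL K n%:R).
have hA : forall n, (N0 <= n)%N -> 1 + A n <= lam n / mu n.
  move=> n hn; have [hn0 hP hn1] := hN n hn.
  apply: le_trans (hyp n hn0); rewrite /A (@sum_split0 K (fun k => 1 / (n%:R * LL k n%:R))) //= LL0 mulr1.
  rewrite /LL le_eqVlt; apply/orP; left; apply/eqP.
  rewrite !addrA -[LHS]addrA -mulrDl; congr (_ + _); congr (_ / _); ring.
have c10 : 0 < c - 1 by rewrite subr_gt0.
have Apos : forall n, (N0 <= n)%N -> 0 <= A n.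
  move=> n hn; have [_ hP hn1] := hN n hn.
  have n0' : 0 < n%:R :> R by apply: lt_trans hn1.
  rewrite /A addr_ge0 // ?sumr_ge0 // => [k _|]; rewrite divr_ge0 ?ltW //.
    by rewrite mulr_gt0 // (LL_gt0 (PosW _ hP)) // -ltnS.
  by rewrite mulr_gt0 // (LL_gt0 hP).
have Abd : forall n, (N0 <= n)%N -> A n <= (K%:R + c) / n%:R.
  move=> n hn; have [_ hP hn1] := hN n hn.
  have n0' : 0 < n%:R :> R by apply: lt_trans hn1.
  have h1 : \sum_(k < K.+1) 1 / (n%:R * LL k (n%:R : R)) <= \sum_(k < K.+1) 1 / (n%:R : R).
    apply: ler_sum => k _; apply: div_le => //; apply: LL_ge1; apply: PosW hP.
    by rewrite -ltnS.
  have h2 : (c - 1) / (n%:R * LL K n%:R) <= (c - 1) / n%:R.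
    by apply: div_le => //; [exact: ltW | exact: LL_ge1].
  rewrite sumr_const card_ord in h1.
  have -> : (K%:R + c) / n%:R = (1 / n%:R) *+ K.+1 + (c - 1) / n%:R.
    by rewrite -[_ *+ K.+1]mulr_natl -natr1; field; rewrite gt_eqF.
  by rewrite /A; apply: lerD.
have step1 : forall n, (N0 <= n)%N -> mu n / lam n <= expR (- A n + A n ^+ 2).
  move=> n hn; have h := hA n hn; have a0 := Apos n hn; set a := A n in h a0 *.
  have a10 : 0 < 1 + a by lra.
  have lm0 : 0 < lam n / mu n by apply: lt_le_trans h.
  apply: (@le_trans _ _ ((1 + a)^-1)).
    by rewrite -invf_div lef_pV2 ?posrE.
  apply: (@le_trans _ _ (1 - a + a ^+ 2)); last first.
    by have := expR_ge1Dx (- a + a ^+ 2); rewrite addrA.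
  rewrite -div1r ler_pdivrMr // mulrC.
  have -> : (1 + a) * (1 - a + a ^+ 2) = 1 + a ^+ 3 by ring.
  by rewrite lerDl exprn_ge0.
pose z (x : R) := lnk K.+1 x.
pose Phi (x : R) := Psi K x + (c - 1) * z x.
have PhiD : forall n, (N0 <= n)%N -> Phi n.+1%:R - Phi n%:R <= A n.
  move=> n hn; have [_ hP hn1] := hN n hn.
  have [_ hP1 _] := hN n.+1 (leqW hn).
  rewrite -natr1 in hP1 *.
  have e : Phi (n%:R + 1) - Phi n%:R = (Psi K (n%:R + 1) - Psi K n%:R)
     + (c - 1) * (z (n%:R + 1) - z n%:R) by rewrite /Phi; ring.
  rewrite e /A; apply: lerD; first exact: Psi_diff_le.
  have -> : (c - 1) / (n%:R * LL K n%:R) = (c - 1) * (1 / (n%:R * LL K n%:R)).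
    by rewrite mulrA mulr1.
  by apply: ler_wpM2l; [exact: ltW | apply: DU].
pose Bq := (K%:R + c) ^+ 2.
have A2 : forall n, (N0 <= n)%N -> A n.+1 ^+ 2 <= Bq / n%:R - Bq / n.+1%:R.
  move=> n hn; have [_ _ hn1] := hN n hn.
  have n0' : 0 < n%:R :> R by apply: lt_trans hn1.
  have n10 : 0 < n.+1%:R :> R by rewrite ltr0Sn.
  have hb := Abd n.+1 (leqW hn); have a0 := Apos n.+1 (leqW hn).
  have Kc : 0 <= K%:R + c by rewrite addr_ge0 // ltW // (lt_trans ltr01).
  apply: (@le_trans _ _ (Bq / (n.+1%:R * n.+1%:R))).
    rewrite /Bq expr2 -[X in _ <= X]mulf_div ler_pM //.
  have -> : Bq / n%:R - Bq / n.+1%:R = Bq / (n%:R * n.+1%:R).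
    by rewrite -natr1; field; rewrite !gt_eqF // -?natr1 ?addr_gt0.
  rewrite ler_wpM2l ?exprn_ge0 // lef_pV2 ?posrE ?mulr_gt0 //.
  by apply: ler_wpM2r; [exact: ltW | rewrite ler_nat].
pose V n := rh n * expR (Phi n.+1%:R + Bq / n%:R).
have Vdec : forall n, (N0 <= n)%N -> V n.+1 <= V n.
  move=> n hn; rewrite /V rhoS -mulrA ler_pM2l ?rpos //.
  apply: le_trans (ler_wpM2r (expR_ge0 _) (step1 _ (leqW hn))) _.
  rewrite -expRD ler_expR.
  have := PhiD _ (leqW hn); have := A2 _ hn.
  set P2 := Phi n.+2%:R; set P1 := Phi n.+1%:R; set a := A n.+1; set b1 := Bq / n%:R; set b2 := Bq / n.+1%:R.
  lra.
have Vle := noninc_from Vdec.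
have Vpos : 0 < V N0 by rewrite /V mulr_gt0 ?rpos ?expR_gt0.
have rhb : forall n, (N0 <= n)%N -> rh n <= V N0 * expR (- Phi n.+1%:R).
  move=> n hn; have [_ _ hn1] := hN n hn.
  have n0' : 0 < n%:R :> R by apply: lt_trans hn1.
  have -> : rh n = rh n * expR (Phi n.+1%:R) * expR (- Phi n.+1%:R).
    by rewrite -mulrA expRxMexpNx_1 mulr1.
  apply: ler_wpM2r; first exact: expR_ge0.
  apply: le_trans (Vle n hn); rewrite /V; apply: ler_wpM2l; first exact: ltW (rpos n).
  rewrite ler_expR lerDl; apply: divr_ge0; [exact: sqr_ge0 | exact: ltW].
have Eb : forall n, (N0 <= n)%N -> expR (- Phi n.+1%:R) * (c - 1) <=
    expR (- (c - 1) * z n%:R) - expR (- (c - 1) * z n.+1%:R).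
  move=> n hn; have [_ hP hn1] := hN n hn.
  have [_ hP1 _] := hN n.+1 (leqW hn).
  rewrite -natr1 in hP1 *.
  set x := n%:R in hP hn1 hP1 *.
  set E1 := expR (- (c - 1) * z (x + 1)).
  set d := z (x + 1) - z x.
  have e1 : expR (- Phi (x + 1)) = E1 * (1 / ((x + 1) * LL K (x + 1))).
    by rewrite /Phi opprD expRD expR_Psi // mulrC /E1 mulNr.
  have e0 : expR (- (c - 1) * z x) = E1 * expR ((c - 1) * d).
    by rewrite /E1 -expRD /d; congr expR; ring.
  have hd : 1 / ((x + 1) * LL K (x + 1)) <= d by apply: DL.
  have hex := expR_ge1Dx ((c - 1) * d).
  have E10 : 0 < E1 by apply: expR_gt0.
  rewrite e1 e0 -mulrA.
  apply: (@le_trans _ _ (E1 * (d * (c - 1)))).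
    apply: ler_wpM2l; first exact: ltW.
    by apply: ler_wpM2r => //; exact: ltW.
  have -> : E1 * expR ((c - 1) * d) - E1 = E1 * (expR ((c - 1) * d) - 1).
    by ring.
  apply: ler_wpM2l; first exact: ltW.
  rewrite mulrC; lra.
pose Pot M := SS M + V N0 / (c - 1) * expR (- (c - 1) * z M%:R).
have Potdec : forall M, (N0 <= M)%N -> Pot M.+1 <= Pot M.
  move=> M hM; rewrite /Pot SS_S.
  have h1 := rhb M hM; have h2 := Eb M hM.
  set E0 := expR (- (c - 1) * z M%:R) in h2 *.
  set E1 := expR (- (c - 1) * z M.+1%:R) in h2 *.
  set P := expR (- Phi M.+1%:R) in h1 h2.
  have h3 : V N0 * P <= V N0 / (c - 1) * (E0 - E1).
    rewrite -mulrA; apply: ler_wpM2l; first exact: ltW.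
    by rewrite mulrC ler_pdivlMr // mulrC.
  have : V N0 / (c - 1) * (E0 - E1) = V N0 / (c - 1) * E0 - V N0 / (c - 1) * E1.
    by rewrite mulrBr.
  lra.
have Potle := noninc_from Potdec.
exists (Pot N0) => M.
have hE : forall M, SS M <= Pot M.
  by move=> M'; rewrite /Pot lerDl mulr_ge0 ?expR_ge0 // divr_ge0 ?ltW.
case: (leqP N0 M) => hM.
  exact: le_trans (hE M) (Potle M hM).
by apply: le_trans (hE N0); apply: SS_mono; apply: ltnW.
Qed.


Lemma rec_unbounded K (n0 : R) : (1 <= K)%N ->
  (forall n : nat, n0 < n%:R ->
        lam n / mu n
        <= 1 + 1 / n%:R
           + \sum_(1 <= k < K.+1) 1 / (n%:R * \prod_(1 <= j < k.+1) lnk j n%:R)) ->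
  forall B, exists M, B < SS M.
Proof.
move=> K1 hyp B.
have [N0 [N02 hN]] := big_N0 n0 K.
pose A (n : nat) := \sum_(k < K.+1) 1 / (n%:R * LL k (n%:R : R)).
have hA : forall n, (N0 <= n)%N -> lam n / mu n <= 1 + A n.
  move=> n hn; have [hn0 hP hn1] := hN n hn.
  apply: le_trans (hyp n hn0) _.
  rewrite /A (@sum_split1 K (fun k => 1 / (n%:R * LL k (n%:R : R)))) //= LL0 mulr1.
  by rewrite addrA.
have Apos : forall n, (N0 <= n)%N -> 0 <= A n.
  move=> n hn; have [_ hP hn1] := hN n hn.
  have n0' : 0 < n%:R :> R by apply: lt_trans hn1.
  apply: sumr_ge0 => k _; apply: divr_ge0 => //; apply: ltW; apply: mulr_gt0 => //.
  by apply: (LL_gt0 (PosW _ hP)); rewrite -ltnS.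
pose z (x : R) := lnk K.+1 x.
pose W n := rh n * expR (Psi K n%:R).
have Winc : forall n, (N0 <= n)%N -> W n <= W n.+1.
  move=> n hn; have [_ hP _] := hN n hn.
  have [_ hP1 _] := hN n.+1 (leqW hn).
  have hA1 := hA n.+1 (leqW hn); have a0 := Apos n.+1 (leqW hn).
  rewrite -natr1 in hP1; have hD := Psi_diff_ge hP hP1.
  rewrite natr1 in hD.
  rewrite /W rhoS -mulrA; apply: ler_wpM2l; first exact: ltW (rpos n).
  set a := A n.+1 in hA1 a0 hD.
  have a10 : 0 < 1 + a by lra.
  have lm0 : 0 < lam n.+1 / mu n.+1 by rewrite divr_gt0.
  have h1 : (1 + a)^-1 <= mu n.+1 / lam n.+1.
    by rewrite -invf_div lef_pV2 ?posrE.
  have h2 : expR (Psi K n%:R) * (1 + a) <= expR (Psi K n.+1%:R).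
    apply: le_trans (_ : expR (Psi K n%:R) * expR a <= _).
      by apply: ler_wpM2l; [exact: expR_ge0 | exact: expR_ge1Dx].
    have hD2 : a <= Psi K n.+1%:R - Psi K n%:R := hD.
    by rewrite -expRD ler_expR; lra.
  apply: le_trans (_ : expR (Psi K n%:R) * (1 + a) * (1 + a)^-1 <= _).
    by rewrite -mulrA divff ?mulr1 ?gt_eqF.
  rewrite mulrC; apply: ler_pM => //.
  - by rewrite invr_ge0 ltW.
  - by rewrite mulr_ge0 ?expR_ge0 ?ltW.
have Wle := nondec_from Winc.
have Wpos : 0 < W N0 by rewrite /W mulr_gt0 ?rpos ?expR_gt0.
have rhb : forall n, (N0 <= n)%N -> W N0 * (z n.+1%:R - z n%:R) <= rh n.
  move=> n hn; have [_ hP hn1] := hN n hn.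
  have [_ hP1 _] := hN n.+1 (leqW hn).
  have n0' : 0 < n%:R :> R by apply: lt_trans hn1.
  rewrite -natr1 in hP1; have hd := DU hP hP1.
  rewrite natr1 in hd.
  have -> : rh n = W n * expR (- Psi K n%:R).
    by rewrite /W -mulrA expRxMexpNx_1 mulr1.
  rewrite expR_Psi //.
  apply: le_trans (_ : W N0 * (1 / (n%:R * LL K n%:R)) <= _).
    by apply: ler_wpM2l; [exact: ltW | exact: hd].
  apply: ler_wpM2r; last exact: Wle.
  by apply: divr_ge0 => //; apply: ltW; apply: mulr_gt0 => //; apply: LL_gt0.
pose Pot M := SS M - W N0 * z M%:R.
have Potinc : forall M, (N0 <= M)%N -> Pot M <= Pot M.+1.
  move=> M hM; rewrite /Pot SS_S; have := rhb M hM.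
  have -> : W N0 * (z M.+1%:R - z M%:R) = W N0 * z M.+1%:R - W N0 * z M%:R by rewrite mulrBr.
  lra.
have Potle := nondec_from Potinc.
pose T := z N0%:R + (B - SS N0) / W N0 + 1.
pose X := Num.max 0 (iter K.+1 expR T).
have X0 : 0 <= X by rewrite /X le_max lexx.
have hX := archi_boundP X0.
pose M := maxn N0 (Num.Def.archi_bound X).
have hM : (N0 <= M)%N by rewrite leq_maxl.
have zM : T <= z M%:R.
  apply: lnk_ge; apply: ltW; apply: le_lt_trans (_ : X < M%:R).
    by rewrite /X le_max lexx orbT.
  by apply: lt_le_trans hX _; rewrite ler_nat leq_maxr.
exists M.
have := Potle M hM; rewrite /Pot.
have : W N0 * T <= W N0 * z M%:R by apply: ler_wpM2l => //; exact: ltW.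
have -> : W N0 * T = W N0 * z N0%:R + (B - SS N0) + W N0.
  by rewrite /T; field; rewrite gt_eqF.
lra.
Qed.

End Main.

Theorem lemma2 (R : realType) (lam mu : nat -> R) :
  (forall n, 0 < lam n) -> (forall n, 0 < mu n) ->
  ((exists (c : R) (K : nat) (n0 : R), 1 < c /\ (1 <= K)%N /\
      forall n : nat, n0 < n%:R ->
        1 + 1 / n%:R
        + \sum_(1 <= k < K) 1 / (n%:R * \prod_(1 <= j < k.+1) lnk j n%:R)
        + c / (n%:R * \prod_(1 <= k < K.+1) lnk k n%:R)
        <= lam n / mu n)
    -> bd_transient lam mu)
  /\
  ((exists (K : nat) (n0 : R), (1 <= K)%N /\
      forall n : nat, n0 < n%:R ->
        lam n / mu n
        <= 1 + 1 / n%:R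
           + \sum_(1 <= k < K.+1) 1 / (n%:R * \prod_(1 <= j < k.+1) lnk j n%:R))
    -> bd_recurrent lam mu).
Proof.
move=> lam0 mu0; split.
  move=> [c [K [n0 [c1 [K1 hyp]]]]].
  apply: (@transient_crit R lam mu lam0 mu0).
  exact: (trans_bound lam0 mu0 c1 K1 hyp).
move=> [K [n0 [K1 hyp]]].
apply: (@recurrent_crit R lam mu lam0 mu0).
exact: (rec_unbounded lam0 mu0 K1 hyp).
Qed.
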